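(* Let $G$ be a finite simple graph with maximum degree $\Delta$. For every edge $e=uv$ of $G$, $$|F(e)|\le \Delta^2-1-\tfrac12|C_e^{\Delta}|-|T_1(e)|-\tfrac12|T_2(e)|-\tfrac12|T_6(e)|.$$ Moreover, if equality holds, then every vertex in $N(u)\cup N(v)$ has degree $\Delta$.
   Context: $N(w)$ is the open neighborhood of a vertex $w$. Two distinct edges $e,f$ are $1$-neighbors if they share an endvertex, and $2$-neighbors if they share no endvertex but some edge of $G$ shares an endvertex with each of them. $N(e)$ is the set of $1$-neighbors of $e$. $C_e^{\Delta}$ denotes the set of $1$-neighbors of $e$ that lie on a common $3$-cycle with $e$. For a $2$-neighbor $f=xy$ of $e=uv$, let $c(e,f)$ be the number of edges of $G$ joining a vertex of $\{u,v\}$ to a vertex of $\{x,y\}$ (so $1\le c(e,f)\le 4$). The type of $f$ (relative to $e$) is: Type 1 if $c(e,f)=4$; Type 2 if $c(e,f)=3$; Type 3 if $c(e,f)=2$ and some vertex of $f$ is adjacent to both $u$ and $v$; Type 4 if $c(e,f)=2$ and the two joining edges form a matching; Type 5 if $c(e,f)=2$ and some vertex of $e$ is adjacent to both $x$ and $y$; Type 6 if $c(e,f)=1$. $T_i(e)$ is the set of $2$-neighbors of $e$ of Type $i$. $F(e)=N(e)\cup T_1(e)\cup T_2(e)\cup T_3(e)\cup T_4(e)\cup T_5(e)$. *)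

(* Defs.v *)
From mathcomp Require Import all_boot all_order all_algebra.
Set Implicit Arguments. Unset Strict Implicit. Unset Printing Implicit Defensive.

(* A finite simple graph: vertex type T : finType, adjacency adj : rel T,
   assumed symmetric and irreflexive (hypotheses of the theorem).
   Edges are represented as 2-element vertex sets {x, y} with adj x y. *)

Section GraphDefs.
Variables (T : finType) (adj : rel T).

Definition nbhd (w : T) : {set T} := [set x | adj w x].

Definition deg (w : T) : nat := #|nbhd w|.

Definition maxdeg : nat := \max_(w : T) deg w.

Definition is_edge (e : {set T}) : bool :=
  [exists x, exists y, adj x y && (e == [set x; y])].

Definition nbr1 (e : {set T}) : {set {set T}} :=
  [set f | is_edge f && (f != e) && (f :&: e != set0)].

Definition nbr2 (e : {set T}) : {set {set T}} :=
  [set f | is_edge f && (f != e) && (f :&: e == set0) &&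
           [exists g, is_edge g && (g :&: e != set0) && (g :&: f != set0)]].

(* C_e^Delta: 1-neighbours of e lying on a common 3-cycle with e;
   for f in N(e) sharing exactly one vertex with e, the third edge of such a
   triangle joins the non-shared endvertex of e to that of f. *)
Definition Ctri (e : {set T}) : {set {set T}} :=
  [set f in nbr1 e | [exists x, exists y,
     [&& x \in e, x \notin f, y \in f, y \notin e & adj x y]]].

(* c(e,f): number of edges joining a vertex of e to a vertex of f
   (for a 2-neighbour f, e and f are disjoint, so such edges correspond
   bijectively to pairs (a,b), a in e, b in f, a ~ b). *)
Definition cef (e f : {set T}) : nat :=
  #|[set p : T * T | [&& p.1 \in e, p.2 \in f & adj p.1 p.2]]|.

Definition Ttype (i : nat) (e : {set T}) : {set {set T}} :=
  [set f in nbr2 e |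
    match i with
    | 1 => cef e f == 4
    | 2 => cef e f == 3
    | 3 => (cef e f == 2) && [exists x in f, [forall y in e, adj x y]]
    | 4 => (cef e f == 2) &&
           [exists a, exists b, exists a', exists b',
              [&& a \in e, a' \in e, b \in f, b' \in f, a != a', b != b',
                  adj a b & adj a' b']]
    | 5 => (cef e f == 2) && [exists x in e, [forall y in f, adj x y]]
    | 6 => cef e f == 1
    | _ => false
    end].

Definition Fset (e : {set T}) : {set {set T}} :=
  nbr1 e :|: Ttype 1 e :|: Ttype 2 e :|: Ttype 3 e :|: Ttype 4 e :|: Ttype 5 e.

End GraphDefs.

(* Main.v *)
Require Import Defs.
From mathcomp Require Import all_boot all_order all_algebra.
From mathcomp Require Import zify.
Import GRing.Theory Num.Theory.
Set Implicit Arguments. Unset Strict Implicit. Unset Printing Implicit Defensive.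

Lemma card_sum (aT : finType) (A : {set aT}) (P : pred aT) :
  #|[set x in A | P x]| = \sum_(x in A) P x.
Proof.
rewrite -sum1_card (eq_bigl (fun x => (x \in A) && P x)); last by move=> x; rewrite inE.
rewrite big_mkcondr; apply: eq_bigr => x _; by case: (P x).
Qed.

Lemma cardU_le (aT : finType) (A B : {set aT}) : #|A :|: B| <= #|A| + #|B|.
Proof. rewrite cardsU; lia. Qed.

Section Pf.
Variables (T : finType) (adj : rel T).
Hypothesis adj_sym : symmetric adj.
Hypothesis adj_irr : irreflexive adj.
Variables (u v : T).
Hypothesis huv : adj u v.
Local Notation e := [set u; v].
Local Notation D := (maxdeg adj).
Local Notation Nu := (nbhd adj u :\ v).
Local Notation Nv := (nbhd adj v :\ u).
Local Notation N2 := (nbr2 adj e).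
Definition deg2 b := #|[set f in N2 | b \in f]|.

Lemma deg_le w : deg adj w <= D.
Proof. exact: (leq_bigmax w). Qed.

Lemma uv_neq : u != v.
Proof. apply/eqP => H; move: huv; by rewrite H adj_irr. Qed.

Lemma edge_at f z : is_edge adj f -> z \in f -> exists w, adj z w /\ f = [set z; w].
Proof.
move=> /existsP[x /existsP[y /andP[hxy /eqP->]]].
rewrite !inE => /orP[/eqP->|/eqP->]; first by exists y.
exists x; split; first by rewrite adj_sym. by rewrite setUC.
Qed.

Lemma disj_nin f w : f :&: e == set0 -> w \in f -> w \notin e.
Proof.
move=> /eqP H hw; apply/negP => he.
have: w \in f :&: e by rewrite inE hw he.
by rewrite H inE.
Qed.

Lemma N1_le : #|nbr1 adj e| <= #|Nu| + #|Nv|.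
Proof.
have sub : nbr1 adj e \subset [set [set u; w] | w in Nu] :|: [set [set v; w] | w in Nv].
  apply/subsetP => f; rewrite inE => /andP[/andP[hf hfe] /set0Pn[z]].
  rewrite inE => /andP[hzf hze].
  have [w [hzw Hf]] := edge_at hf hzf.
  rewrite Hf in hfe *.
  move: hze; rewrite !inE => /orP[/eqP Hz|/eqP Hz]; rewrite Hz in hzw hfe *.
  - apply/orP; left; apply/imsetP; exists w => //. rewrite !inE hzw andbT.
    apply/eqP => Hw; move: hfe; by rewrite Hw eqxx.
  - apply/orP; right; apply/imsetP; exists w => //. rewrite !inE hzw andbT.
    apply/eqP => Hw; move: hfe; by rewrite Hw setUC eqxx.
apply: (leq_trans (subset_leq_card sub)).
apply: (leq_trans (cardU_le _ _)).
by apply: leq_add; apply: leq_imset_card.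
Qed.

Local Notation Cu := [set b in Nu | adj v b].
Local Notation Cv := [set b in Nv | adj u b].

Lemma Ctri_le : #|Ctri adj e| <= #|Cu| + #|Cv|.
Proof.
have sub : Ctri adj e \subset [set [set u; w] | w in Cu] :|: [set [set v; w] | w in Cv].
  apply/subsetP => f; rewrite inE => /andP[hn1 /existsP[x /existsP[y /and5P[hx hxf hyf hye hxy]]]].
  move: hn1; rewrite inE => /andP[/andP[hf hfe] /set0Pn[z]].
  rewrite inE => /andP[hzf hze].
  have [w [hzw Hf]] := edge_at hf hzf.
  rewrite Hf in hxf hyf *.
  have Hyw : y = w.
    move: hyf; rewrite !inE => /orP[/eqP Hy|/eqP //].
    by move: hye; rewrite Hy hze.
  rewrite Hyw in hye hxy.
  move: hxf hze hx hye; rewrite !inE !negb_or => /andP[hxz _] /orP[/eqP Hz|/eqP Hz] /orP[/eqP Hx|/eqP Hx] /andP[hwu hwv].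
  - by move: hxz; rewrite Hx Hz eqxx.
  - rewrite Hz in hzw *; rewrite Hx in hxy.
    apply/orP; left; apply/imsetP; exists w => //.
    by rewrite !inE hwv hzw hxy.
  - rewrite Hz in hzw *; rewrite Hx in hxy.
    apply/orP; right; apply/imsetP; exists w => //.
    by rewrite !inE hwu hzw hxy.
  - by move: hxz; rewrite Hx Hz eqxx.
apply: (leq_trans (subset_leq_card sub)).
apply: (leq_trans (cardU_le _ _)).
by apply: leq_add; apply: leq_imset_card.
Qed.

Lemma deg2_le b : adj u b -> deg2 b + 1 + adj v b + (D - deg adj b) <= D.
Proof.
move=> hub.
have h1 : deg2 b <= #|nbhd adj b :\: e|.
  rewrite /deg2.
  have sub : [set f in N2 | b \in f] \subset [set [set b; y] | y in nbhd adj b :\: e].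
    apply/subsetP => f; rewrite inE => /andP[hf hbf].
    move: hf; rewrite inE => /andP[/andP[/andP[hf _] hdisj] _].
    have [w [hbw Hf]] := edge_at hf hbf.
    apply/imsetP; exists w => //.
    rewrite inE (disj_nin hdisj) /=; first by rewrite inE.
    by rewrite Hf !inE eqxx orbT.
  apply: (leq_trans (subset_leq_card sub)); exact: leq_imset_card.
have h2 : 1 + adj v b <= #|nbhd adj b :&: e|.
  case hvb: (adj v b).
  - have -> : nbhd adj b :&: e = e.
      apply/setIidPr/subsetP => x; rewrite !inE => /orP[/eqP->|/eqP->].
      + by rewrite adj_sym.
      + by rewrite adj_sym.
    by rewrite cards2 uv_neq.
  - rewrite addn0 card_gt0; apply/set0Pn; exists u; rewrite !inE eqxx andbT.
    by rewrite adj_sym.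
have h3 := cardsID e (nbhd adj b).
have h4 := deg_le b.
rewrite /deg in h4 *. lia.
Qed.

Lemma deg2_le' b : adj v b -> deg2 b + 1 + adj u b + (D - deg adj b) <= D.
Proof.
move=> hub.
have h1 : deg2 b <= #|nbhd adj b :\: e|.
  rewrite /deg2.
  have sub : [set f in N2 | b \in f] \subset [set [set b; y] | y in nbhd adj b :\: e].
    apply/subsetP => f; rewrite inE => /andP[hf hbf].
    move: hf; rewrite inE => /andP[/andP[/andP[hf _] hdisj] _].
    have [w [hbw Hf]] := edge_at hf hbf.
    apply/imsetP; exists w => //.
    rewrite inE (disj_nin hdisj) /=; first by rewrite inE.
    by rewrite Hf !inE eqxx orbT.
  apply: (leq_trans (subset_leq_card sub)); exact: leq_imset_card.
have h2 : 1 + adj u b <= #|nbhd adj b :&: e|.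
  case hvb: (adj u b).
  - have -> : nbhd adj b :&: e = e.
      apply/setIidPr/subsetP => x; rewrite !inE => /orP[/eqP->|/eqP->].
      + by rewrite adj_sym.
      + by rewrite adj_sym.
    by rewrite cards2 uv_neq.
  - rewrite addn0 card_gt0; apply/set0Pn; exists v; rewrite !inE eqxx orbT.
    by rewrite andbT adj_sym.
have h3 := cardsID e (nbhd adj b).
have h4 := deg_le b.
rewrite /deg in h4 *. lia.
Qed.

Lemma cef_le f : f \in N2 ->
  cef adj e f <= #|[set b in Nu | b \in f]| + #|[set b in Nv | b \in f]|.
Proof.
rewrite inE => /andP[/andP[_ hdisj] _].
have sub : [set p : T * T | [&& p.1 \in e, p.2 \in f & adj p.1 p.2]] \subset
  [set (u, b) | b in [set b in Nu | b \in f]] :|: [set (v, b) | b in [set b in Nv | b \in f]].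
  apply/subsetP => -[a b]; rewrite inE /= => /and3P[ha hb hab].
  have hbe := disj_nin hdisj hb.
  move: hbe ha; rewrite !inE negb_or => /andP[hbu hbv] /orP[/eqP Ha|/eqP Ha]; rewrite Ha in hab *.
  - apply/orP; left; apply/imsetP; exists b => //. by rewrite !inE hbv hab hb.
  - apply/orP; right; apply/imsetP; exists b => //. by rewrite !inE hbu hab hb.
rewrite /cef; apply: (leq_trans (subset_leq_card sub)).
apply: (leq_trans (cardU_le _ _)).
by apply: leq_add; apply: leq_imset_card.
Qed.

Lemma sum_deg2 (A : {set T}) :
  \sum_(b in A) deg2 b = \sum_(f in N2) #|[set b in A | b \in f]|.
Proof.
rewrite /deg2.
under eq_bigr => b _ do rewrite card_sum.
rewrite exchange_big /=.
apply: eq_bigr => f _; by rewrite card_sum.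
Qed.

Lemma sumc_le : \sum_(f in N2) cef adj e f <= \sum_(b in Nu) deg2 b + \sum_(b in Nv) deg2 b.
Proof.
rewrite !sum_deg2 -big_split /=.
apply: leq_sum => f hf; exact: cef_le.
Qed.

Lemma types_le :
  4 * #|Ttype adj 1 e| + 3 * #|Ttype adj 2 e| + 2 * #|[set f in N2 | cef adj e f == 2]|
  + #|Ttype adj 6 e| <= \sum_(f in N2) cef adj e f.
Proof.
have -> : Ttype adj 1 e = [set f in N2 | cef adj e f == 4] by [].
have -> : Ttype adj 2 e = [set f in N2 | cef adj e f == 3] by [].
have -> : Ttype adj 6 e = [set f in N2 | cef adj e f == 1] by [].
rewrite !card_sum !big_distrr -!big_split /=.
apply: leq_sum => f _.
by case: (cef adj e f) => [|[|[|[|[|n]]]]].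
Qed.

Lemma Tsub i : 2 < i < 6 -> Ttype adj i e \subset [set f in N2 | cef adj e f == 2].
Proof.
case/andP; case: i => [|[|[|[|[|[|i]]]]]] // _ _; apply/subsetP => f;
  rewrite !inE => /andP[-> /andP[-> _]] //.
Qed.

Lemma Fset_le : #|Fset adj e| <= #|nbr1 adj e| + #|Ttype adj 1 e| + #|Ttype adj 2 e|
   + #|[set f in N2 | cef adj e f == 2]|.
Proof.
have sub : Fset adj e \subset nbr1 adj e :|: Ttype adj 1 e :|: Ttype adj 2 e
   :|: [set f in N2 | cef adj e f == 2].
  apply/subsetP => f; rewrite /Fset !in_setU => /orP[/orP[/orP[/orP[/orP[h|h]|h]|h]|h]|h];
    rewrite ?h ?orbT //.
  - by rewrite (subsetP (@Tsub 3 erefl) _ h) orbT.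
  - by rewrite (subsetP (@Tsub 4 erefl) _ h) orbT.
  - by rewrite (subsetP (@Tsub 5 erefl) _ h) orbT.
apply: (leq_trans (subset_leq_card sub)).
apply: (leq_trans (cardU_le _ _)); rewrite leq_add2r.
apply: (leq_trans (cardU_le _ _)); rewrite leq_add2r.
exact: cardU_le.
Qed.

Lemma sum6u : \sum_(b in Nu) deg2 b + #|Nu| + #|Cu| + \sum_(b in Nu) (D - deg adj b)
   <= #|Nu| * D.
Proof.
have H : \sum_(b in Nu) (deg2 b + 1 + adj v b + (D - deg adj b)) <= \sum_(b in Nu) D.
  apply: leq_sum => b; rewrite !inE => /andP[_ hb]; exact: deg2_le.
by rewrite !big_split /= sum1_card sum_nat_const -(card_sum Nu (adj v)) in H.
Qed.

Lemma sum6v : \sum_(b in Nv) deg2 b + #|Nv| + #|Cv| + \sum_(b in Nv) (D - deg adj b)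
   <= #|Nv| * D.
Proof.
have H : \sum_(b in Nv) (deg2 b + 1 + adj u b + (D - deg adj b)) <= \sum_(b in Nv) D.
  apply: leq_sum => b; rewrite !inE => /andP[_ hb]; exact: deg2_le'.
by rewrite !big_split /= sum1_card sum_nat_const -(card_sum Nv (adj u)) in H.
Qed.

Lemma degu : deg adj u = #|Nu| + 1.
Proof. by rewrite /deg (cardsD1 v) !inE huv addnC. Qed.
Lemma degv : deg adj v = #|Nv| + 1.
Proof. by rewrite /deg (cardsD1 u) !inE adj_sym huv addnC. Qed.

Lemma main_nat :
  2 * #|Fset adj e| + #|Ctri adj e| + 2 * #|Ttype adj 1 e| + #|Ttype adj 2 e|
  + #|Ttype adj 6 e| + 2
  + (\sum_(b in Nu) (D - deg adj b) + \sum_(b in Nv) (D - deg adj b)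
     + (D - deg adj u) + (D - deg adj v)) <= 2 * D ^ 2.
Proof.
have h1 := Fset_le. have h2 := N1_le. have h3 := Ctri_le. have h4 := types_le.
have h5 := sumc_le. have h6 := sum6u. have h7 := sum6v.
have h8 := deg_le u. have h9 := deg_le v.
rewrite degu degv in h8 h9 *.
nia.
Qed.
End Pf.

From mathcomp Require Import lra.
Local Open Scope ring_scope.

Theorem mainTheorem9 (T : finType) (adj : rel T)
  (adj_sym : symmetric adj) (adj_irr : irreflexive adj)
  (u v : T) (huv : adj u v) :
  let e := [set u; v] in
  let D := (maxdeg adj)%:R : rat in
  (#|Fset adj e|%:R : rat) <=
    D ^+ 2 - 1 - (#|Ctri adj e|%:R) / 2 - #|Ttype adj 1 e|%:R
    - (#|Ttype adj 2 e|%:R) / 2 - (#|Ttype adj 6 e|%:R) / 2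
  /\
  ((#|Fset adj e|%:R : rat) =
    D ^+ 2 - 1 - (#|Ctri adj e|%:R) / 2 - #|Ttype adj 1 e|%:R
    - (#|Ttype adj 2 e|%:R) / 2 - (#|Ttype adj 6 e|%:R) / 2 ->
   forall w : T, w \in nbhd adj u :|: nbhd adj v -> deg adj w = maxdeg adj).
Proof.
move=> e D; rewrite /D /e.
have H := main_nat adj_sym adj_irr huv.
set F := #|Fset adj _| in H *.
set C := #|Ctri adj _| in H *.
set t1 := #|Ttype adj 1 _| in H *.
set t2 := #|Ttype adj 2 _| in H *.
set t6 := #|Ttype adj 6 _| in H *.
set M := maxdeg adj in H *.
set S := (X in (_ + X <= _)%N) in H.
have Hn : (2 * F + C + 2 * t1 + t2 + t6 + 2 <= 2 * M ^ 2)%N.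
  by apply: leq_trans H; apply: leq_addr.
have Hr : ((2 * F + C + 2 * t1 + t2 + t6 + 2)%N%:R <= (2 * M ^ 2)%N%:R :> rat) by rewrite ler_nat.
rewrite !natrD !natrM ?natrX in Hr; rewrite expr2.
split; first by lra.
move=> Heq w hw.
have Hne : (2 * F + C + 2 * t1 + t2 + t6 + 2 = 2 * M ^ 2)%N.
  apply/eqP; rewrite -(eqr_nat rat) !natrD !natrM ?natrX; apply/eqP; lra.
have HS : S = 0%N by lia.
rewrite /S in HS.
have hu := deg_le adj u. have hv := deg_le adj v. have hw' := deg_le adj w.
rewrite -/M in hu hv hw'.
move: hw; rewrite inE => /orP[hw|hw].
- case hwv: (w == v); first by move/eqP: hwv => ->; apply/eqP; rewrite eqn_leq hv; lia.
  have hwN : w \in nbhd adj u :\ v by rewrite in_setD1 hwv hw.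
  have : (M - deg adj w <= \sum_(b in nbhd adj u :\ v) (M - deg adj b))%N.
    by rewrite (bigD1 w hwN) /= leq_addr.
  move=> hle. apply/eqP; rewrite eqn_leq hw'; lia.
- case hwu: (w == u); first by move/eqP: hwu => ->; apply/eqP; rewrite eqn_leq hu; lia.
  have hwN : w \in nbhd adj v :\ u by rewrite in_setD1 hwu hw.
  have : (M - deg adj w <= \sum_(b in nbhd adj v :\ u) (M - deg adj b))%N.
    by rewrite (bigD1 w hwN) /= leq_addr.
  move=> hle. apply/eqP; rewrite eqn_leq hw'; lia.
Qed.
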